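(* Assume $N>2m$, where $m=\max_{i\in\mathcal{B}}r_i$, and let $\delta=N/m$. Let $p=\sum_{i}v_ix_i$ be the value of the output of Algorithm 1 (described below), and let $\mathrm{OPT}$ be the optimal value of the WDP. Then $p\ge \alpha\cdot\mathrm{OPT}$, where $\alpha=\frac{\delta-2}{\delta e-2}$.
   Context: Setting: a finite set of bidders $\mathcal{B}=\mathcal{B}_r\cup\mathcal{B}_u$ (disjoint), indexed $1,\dots,|\mathcal{B}|$, and $N$ resource blocks $k=1,\dots,N$. Each bidder $i$ has a bid $(r_i,v_i)$ with $r_i$ a positive integer and $v_i\ge 0$. The WDP is: maximize $\sum_i v_i x_i$ subject to $\sum_k a_{ik}=r_ix_i$ for $1\le i\le|\mathcal{B}|$; $\sum_{i=1}^{|\mathcal{B}|+1}a_{ik}\le1$ for all $k$; $\sum_k a_{ik}\le\sum_k a_{|\mathcal{B}|+1,k}$ for $i\in\mathcal{B}_r$; $a_{ik},x_i\in\{0,1\}$. The index $|\mathcal{B}|+1$ denotes reserved RBs. Algorithm 1: 1. Initialize $x_i=0$ for all $i$, $\mathcal{C}=\emptyset$, $p=0$, $t=0$, $\lambda^0=1/N$. 2. While $\mathcal{C}\ne\mathcal{B}$ and $N\lambda^t\le\exp(\delta-2)$: (a) pick $\mu=\arg\max_{i\in\mathcal{B}\setminus\mathcal{C}}v_i/r_i$; (b) set $x_\mu=1$, $p\leftarrow p+v_\mu$ and $\mathcal{C}\leftarrow\mathcal{C}\cup\{\mu\}$; (c) set $\lambda^{t+1}=\lambda^t\exp(\delta-2)^{r_\mu/(N-2m)}$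 and $t\leftarrow t+1$. *)

(* Defs.v *)
From HB Require Import structures.
From mathcomp Require Import all_boot all_order all_algebra.
From mathcomp Require Import all_classical all_reals all_analysis.
Set Implicit Arguments. Unset Strict Implicit. Unset Printing Implicit Defensive.
Import Order.TTheory GRing.Theory Num.Theory.
Local Open Scope ring_scope.

(* Bidders are 'I_n (n = |B|), resource blocks are 'I_N.
   resv i = true  iff  i \in B_r  (otherwise i \in B_u).
   The allocation matrix a_{ik} for bidders is [a (i,k)], and the row
   |B|+1 of reserved RBs is [ar k]. *)
Definition feasible (n N : nat) (r : 'I_n -> nat) (resv : 'I_n -> bool)
  (x : {ffun 'I_n -> bool}) (a : {ffun 'I_n * 'I_N -> bool})
  (ar : {ffun 'I_N -> bool}) : bool :=
  [&& [forall i, (\sum_(k < N) a (i, k) == r i * x i)%N],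
      [forall k, (\sum_(i < n) a (i, k) + ar k <= 1)%N] &
      [forall i, resv i ==> (\sum_(k < N) a (i, k) <= \sum_(k < N) ar k)%N]].

Definition wdp_value (R : realType) (n : nat) (v : 'I_n -> R)
  (x : {ffun 'I_n -> bool}) : R := \sum_(i < n) (x i)%:R * v i.

Definition OPT (R : realType) (n N : nat) (r : 'I_n -> nat)
  (resv : 'I_n -> bool) (v : 'I_n -> R) : R :=
  \big[Num.max/0]_(c : {ffun 'I_n -> bool} * {ffun 'I_n * 'I_N -> bool}
                       * {ffun 'I_N -> bool} | feasible r resv c.1.1 c.1.2 c.2)
     wdp_value v c.1.1.

Definition mmax (n : nat) (r : 'I_n -> nat) : nat := \max_(i < n) r i.
Definition delta (R : realType) (n N : nat) (r : 'I_n -> nat) : R :=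
  N%:R / (mmax r)%:R.

Definition lam (R : realType) (n N : nat) (r : 'I_n -> nat) (s : seq 'I_n) : R :=
  foldl (fun l mu => l * (expR (delta R N r - 2)
            `^ ((r mu)%:R / (N%:R - 2 * (mmax r)%:R)))) (N%:R)^-1 s.

Definition guard (R : realType) (n N : nat) (r : 'I_n -> nat) (s : seq 'I_n) : bool :=
  N%:R * lam R N r s <= expR (delta R N r - 2).

(* s is the sequence of bidders picked (in order) by some execution of
   Algorithm 1 (any tie-breaking in the argmax). *)
Definition alg1_run (R : realType) (n N : nat) (r : 'I_n -> nat)
  (v : 'I_n -> R) (s : seq 'I_n) : Prop :=
  uniq s /\
  (forall t, (t < size s)%N ->
     (~~ [forall j, j \in take t s]) /\ guard R N r (take t s) /\
     (forall j, j \notin take t s ->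
        v j / (r j)%:R <= v (nth j s t) / (r (nth j s t))%:R)) /\
  ([forall j, j \in s] \/ ~~ guard R N r s).

Definition alg_value (R : realType) (n : nat) (v : 'I_n -> R) (s : seq 'I_n) : R :=
  \sum_(i <- s) v i.

(* Main.v *)
Require Import Defs.
From HB Require Import structures.
From mathcomp Require Import all_boot all_order all_algebra.
From mathcomp Require Import all_classical all_reals all_analysis.
From mathcomp Require Import ring lra.
Import Order.TTheory GRing.Theory Num.Theory.
Local Open Scope ring_scope.

Lemma foldl_lam (R : realType) (n : nat) (r : 'I_n -> nat) (c D : R) (s : seq 'I_n) (l : R) :
  foldl (fun l mu => l * (expR c `^ ((r mu)%:R / D))) l s =
  l * expR (c * (\sum_(i <- s) r i)%:R / D).
Proof.
elim: s l => [|a s IH] l /=; first by rewrite big_nil mulr0 mul0r expR0 mulr1.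
rewrite IH big_cons natrD /powR gt_eqF ?expR_gt0 // expRK -mulrA -expRD.
congr (_ * expR _); rewrite !mulrDr !mulrDl; lra.
Qed.

Lemma guard_iff (R : realType) (n N : nat) (r : 'I_n -> nat) (s : seq 'I_n) :
  (0 < N)%N -> 2 < delta R N r -> 0 < N%:R - 2 * (mmax r)%:R :> R ->
  guard R N r s = ((\sum_(i <- s) r i)%:R <= N%:R - 2 * (mmax r)%:R :> R).
Proof.
move=> N0 d2 D0; rewrite /guard /lam foldl_lam mulrA mulfV ?pnatr_eq0 -?lt0n // mul1r.
rewrite ler_expR -mulrA ger_pMr ?subr_gt0 // ler_pdivrMr // mul1r.
reflexivity.
Qed.

Lemma arith_final (R: realType) (NN MM d p Rs e : R) : NN - 2*MM < Rs -> 0 <= d -> d*Rs <= p -> 2 <= e -> 0 < MM -> 2*MM < NN ->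
 (NN - 2*MM)*(p + d*(NN-Rs)) <= p*(NN*e - 2*MM).
Proof.
move=> h1 h2 h3 h4 h5 h6.
have p0 : 0 <= p by nra.
have [hl|hl] := lerP NN Rs.
  have f1 : 0 <= (NN - 2*MM) * d * (Rs - NN) by rewrite mulr_ge0 ?mulr_ge0; lra.
  have f2 : 0 <= p * NN * (e - 1) by rewrite mulr_ge0 ?mulr_ge0; lra.
  nra.
have f1 : (NN-2*MM)*d*(NN-Rs) <= Rs*d*(NN-Rs).
  by rewrite ler_wpM2r ?ler_wpM2r; lra.
have f2 : Rs*d*(NN-Rs) <= p*(NN-Rs) by rewrite ler_wpM2r; lra.
have f3 : 0 <= p * Rs by rewrite mulr_ge0; lra.
have f2' : 0 <= p * NN * (e - 2) by rewrite mulr_ge0 ?mulr_ge0; lra.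
nra.
Qed.

Lemma feas_cap (n N : nat) (r : 'I_n -> nat) (resv : 'I_n -> bool)
  (x : {ffun 'I_n -> bool}) (a : {ffun 'I_n * 'I_N -> bool})
  (ar : {ffun 'I_N -> bool}) :
  feasible r resv x a ar -> (\sum_(i < n) r i * x i <= N)%N.
Proof.
case/and3P => /forallP F1 /forallP F2 _.
rewrite (eq_bigr (fun i => \sum_(k < N) a (i, k))%N); last by move=> i _; rewrite (eqP (F1 i)).
rewrite exchange_big /=.
apply: (@leq_trans (\sum_(k < N) 1)%N).
  by apply: leq_sum => k _; apply: leq_trans (F2 k); apply: leq_addr.
by rewrite sum_nat_const card_ord muln1.
Qed.

Lemma OPT_ge0 (R : realType) (n N : nat) (r : 'I_n -> nat)
  (resv : 'I_n -> bool) (v : 'I_n -> R) : (forall i, 0 <= v i) -> 0 <= OPT N r resv v.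
Proof.
move=> vpos; rewrite /OPT; elim/big_ind: _ => //.
  by move=> x y hx hy; rewrite le_max hx.
move=> c _; rewrite /wdp_value sumr_ge0 // => i _; rewrite mulr_ge0 //.
Qed.

Lemma OPT_le (R : realType) (n N : nat) (r : 'I_n -> nat)
  (resv : 'I_n -> bool) (v : 'I_n -> R) (B : R) : 0 <= B ->
  (forall x (a : {ffun 'I_n * 'I_N -> bool}) ar, feasible r resv x a ar -> wdp_value v x <= B) -> OPT N r resv v <= B.
Proof.
move=> B0 H; rewrite /OPT; apply: bigmax_le => // c hc.
exact: H hc.
Qed.

Theorem theorem4 (R : realType) (n N : nat) (r : 'I_n -> nat)
  (resv : 'I_n -> bool) (v : 'I_n -> R) (s : seq 'I_n) :
  (forall i, (0 < r i)%N) ->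
  (forall i, 0 <= v i) ->
  (2 * mmax r < N)%N ->
  alg1_run N r v s ->
  alg_value v s >=
    (delta R N r - 2) / (delta R N r * expR 1 - 2) * OPT N r resv v.
Proof.
move=> rpos vpos H2m [us [Hstep Hend]].
have e2 : 2 <= expR 1 :> R by have := expR_ge1Dx (1:R); lra.
have OPT0 : 0 <= OPT N r resv v by apply: OPT_ge0.
have p0 : 0 <= alg_value v s by rewrite /alg_value sumr_ge0.
have N0 : (0 < N)%N by apply: leq_ltn_trans H2m.
have NR0 : 0 < N%:R :> R by rewrite ltr0n.
have dpos : (0 < mmax r)%N -> 2 < delta R N r.
  by move=> M0; rewrite /delta ltr_pdivlMr ?ltr0n // -natrM ltr_nat.
have [allin|notall] := boolP [forall j, j \in s].
  have OPTp : OPT N r resv v <= alg_value v s.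
    apply: OPT_le => // x a ar _.
    rewrite /wdp_value /alg_value (big_uniq _ us) /=.
    have -> : \sum_(i in s) v i = \sum_i v i.
      by apply: eq_bigl => i; rewrite /= (forallP allin).
    by apply: ler_sum => i _; case: (x i); rewrite ?mul1r ?mul0r.
  apply: (le_trans _ OPTp); apply: ler_piMl => //.
  have [M0|M0] := posnP (mmax r).
    by rewrite /delta M0 invr0 mulr0 mul0r divff // oppr_eq0 pnatr_eq0.
  have d2 := dpos M0.
  rewrite ler_pdivrMr ?mul1r; nra.
move/forallPn: notall => [j0 j0n].
have M0 : (0 < mmax r)%N by apply: leq_trans (rpos j0) (leq_bigmax j0).
have d2 := dpos M0.
set D : R := N%:R - 2 * (mmax r)%:R.
have D0 : 0 < D by rewrite /D subr_gt0 -natrM ltr_nat.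
have ng : ~~ guard R N r s by case: Hend => // /forallP /(_ j0); rewrite (negbTE j0n).
rewrite guard_iff // -ltNge in ng.
set Rs := (\sum_(i <- s) r i)%N in ng.
have sn0 : (0 < size s)%N.
  rewrite lt0n; apply/negP => /eqP/size0nil s0; move: ng; rewrite /Rs s0 big_nil; move: D0; rewrite /D; lra.
set t0 := (size s).-1.
have t0s : (t0 < size s)%N by rewrite /t0 prednK.
set il := nth j0 s t0.
set d := v il / (r il)%:R.
have d0 : 0 <= d by rewrite /d divr_ge0.
have hd_out : forall j, j \notin s -> v j / (r j)%:R <= d.
  move=> j jn; have [_ [_ H]] := Hstep t0 t0s.
  rewrite /d /il (set_nth_default j) //; apply: H.
  by apply: contra jn; apply: mem_take.
have hd_in : forall i, i \in s -> d <= v i / (r i)%:R.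
  move=> i is_; set t := index i s.
  have ts : (t < size s)%N by rewrite index_mem.
  have [_ [_ H]] := Hstep t ts.
  have := H il; rewrite (set_nth_default i) // nth_index //; apply.
  apply/negP => hin.
  set k := index il (take t s).
  have ks : (k < t)%N.
    by have := hin; rewrite -index_mem size_take ts.
  have hk : nth j0 s k = nth j0 s t0.
    by rewrite -(nth_take _ ks) nth_index.
  have := index_uniq j0 t0s us; rewrite -hk index_uniq //; last first.
    by apply: ltn_trans ks ts.
  move=> kt0; move: ks; rewrite kt0 ltnNge => /negP; apply.
  by rewrite /t0 -ltnS prednK.
have pdR : d * Rs%:R <= alg_value v s.
  rewrite /Rs natr_sum mulr_sumr /alg_value big_seq [X in _ <= X]big_seq.
  apply: ler_sum => i is_.
  by rewrite -ler_pdivlMr ?ltr0n // hd_in.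
have OPTB : OPT N r resv v <= alg_value v s + d * (N%:R - Rs%:R).
  apply: OPT_le.
    have : 0 <= d * N%:R by rewrite mulr_ge0 // ler0n.
    nra.
  move=> x a ar hf.
  have cap : (\sum_(i < n) r i * x i <= N)%N by apply: feas_cap hf.
  apply: (@le_trans _ _ (\sum_(i < n) ((i \in s)%:R * v i +
       d * ((r i * x i)%:R - (i \in s)%:R * (r i)%:R)))).
    apply: ler_sum => i _.
    have h1 := hd_in i; have h2 := hd_out i.
    have ri0 : 0 < (r i)%:R :> R by rewrite ltr0n.
    case: (x i); case: (boolP (i \in s)) => hi /=;
      rewrite ?muln1 ?muln0 ?mul1r ?mul0r ?subrr ?mulr0 ?addr0 ?add0r ?subr0 ?sub0r //.
    - by move: (h2 hi); rewrite ler_pdivrMr // mulrC.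
    - move: (h1 hi); rewrite ler_pdivlMr // mulrN subr_ge0 => ->. done.
  rewrite big_split /= -mulr_sumr sumrB -!natr_sum.
  have -> : \sum_(i < n) (i \in s)%:R * v i = alg_value v s.
    rewrite /alg_value (big_uniq _ us) /=.
    by rewrite [RHS]big_mkcond; apply: eq_bigr => i _ /=; case: (i \in s); rewrite ?mul1r ?mul0r.
  have -> : \sum_(i < n) (i \in s)%:R * (r i)%:R = Rs%:R :> R.
    rewrite /Rs (big_uniq _ us) natr_sum /=.
    by rewrite [RHS]big_mkcond; apply: eq_bigr => i _ /=; case: (i \in s); rewrite ?mul1r ?mul0r.
  rewrite lerD2l ler_wpM2l // lerB // ler_nat.
  by rewrite (eq_bigr (fun i => r i * x i)%N).
have MR0 : 0 < (mmax r)%:R :> R by rewrite ltr0n.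
have K0 : 0 < N%:R * expR 1 - 2 * (mmax r)%:R :> R.
  move: D0; rewrite /D => D0; nra.
have de0 : 0 < delta R N r * expR 1 - 2 by nra.
have hal : (delta R N r - 2) / (delta R N r * expR 1 - 2) *
   (N%:R * expR 1 - 2 * (mmax r)%:R) = N%:R - 2 * (mmax r)%:R.
  rewrite /delta; field.
  by apply/andP; split; apply: lt0r_neq0 => //; lra.
have al0 : 0 <= (delta R N r - 2) / (delta R N r * expR 1 - 2).
  by rewrite divr_ge0 //; lra.
apply: le_trans (ler_wpM2l al0 OPTB) _.
rewrite -(ler_pM2r K0) mulrAC hal.
apply: arith_final => //; try lra.
by rewrite -natrM ltr_nat.
Qed.
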